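(* Let $(G,u,v,\alpha,\beta)$ be a Guvab satisfying all of the following: (i) $\beta=1$; (ii) $2d(u,v)=\max_{w\in V(G)}d(w,v)$; (iii) if $d(x,v)=\max_{w\in V(G)}d(w,v)$, then $d(n,v)<d(x,v)$ for every neighbor $n$ of $x$; (iv) if $0<d(x,v)<\max_{w\in V(G)}d(w,v)$, then for exactly half of the neighbors $n$ of $x$ we have $d(n,v)<d(x,v)$ and for exactly the other half we have $d(n,v)>d(x,v)$. Then $W_0=W_1=W_2=\cdots$.
   Context: A Guvab is a tuple $(G,u,v,\alpha,\beta)$ where $G$ is a finite, connected, simple graph, $u,v\in V(G)$, and $\alpha,\beta\in[0,1]$ with $\alpha\le\beta$. A random walk on $G$ with starting vertex $w$ and laziness $\gamma$ is the Markov chain $R_0=w$ and, for $i\ge1$, $R_i=R_{i-1}$ with probability $\gamma$ and $R_i=t$ with probability $\frac{1-\gamma}{\deg(R_{i-1})}$ for each neighbor $t$ of $R_{i-1}$. $\mu_k$ is the distribution after $k$ steps of the walk from $u$ with laziness $\alpha$, $\nu_k$ that of the walk from $v$ with laziness $\beta$, and $W_k=W(\mu_k,\nu_k)$ is the Wasserstein ($L^1$ optimal transport) distance with respect to the graph distance $d$. *)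

(* Defs.v *)
From mathcomp Require Import all_boot all_order all_algebra.
From mathcomp Require Import classical_sets reals.
Set Implicit Arguments. Unset Strict Implicit. Unset Printing Implicit Defensive.
Import Order.TTheory GRing.Theory Num.Theory.
Local Open Scope ring_scope.

Section Graph.
Variable T : finType.
Variable e : rel T.

Definition simple_graph := symmetric e /\ irreflexive e.
Definition connected_graph := forall x y : T, connect e x y.

Definition nbhd (x : T) : {set T} := [set y | e x y].
Definition deg (x : T) : nat := #|nbhd x|.

Definition walk_len (x y : T) (n : nat) : bool :=
  [exists p : n.-tuple T, path e x p && (last x p == y)].

(* graph distance: least n such that a walk of length n from x to y exists
   (for a connected graph such an n is < #|T|, so the search range is enough) *)
Definition gdist (x y : T) : nat := find (walk_len x y) (iota 0 #|T|).

Definition ecc (v : T) : nat := \max_(w : T) gdist w v.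

Variable R : realType.

Definition trans (g : R) (x y : T) : R :=
  (if x == y then g else 0) + (if e x y then (1 - g) / (deg x)%:R else 0).

Fixpoint walk_dist (g : R) (w : T) (k : nat) : T -> R :=
  match k with
  | 0 => fun y => if y == w then 1 else 0
  | k'.+1 => fun y => \sum_(x : T) walk_dist g w k' x * trans g x y
  end.

Definition coupling (mu nu : T -> R) (pi : T -> T -> R) : Prop :=
  (forall x y, 0 <= pi x y) /\
  (forall x, \sum_(y : T) pi x y = mu x) /\
  (forall y, \sum_(x : T) pi x y = nu y).

Definition tcost (pi : T -> T -> R) : R :=
  \sum_(x : T) \sum_(y : T) pi x y * (gdist x y)%:R.

Definition wasserstein (mu nu : T -> R) : R :=
  inf [set c | exists pi, coupling mu nu pi /\ c = tcost pi]%classic.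

End Graph.

(* Main.v *)
Require Import Defs.
From mathcomp Require Import all_boot all_order all_algebra.
From mathcomp Require Import classical_sets reals boolp.
From mathcomp Require Import zify ring lra.
Import Order.TTheory GRing.Theory Num.Theory.
Local Open Scope ring_scope.
Set Implicit Arguments. Unset Strict Implicit.

Section G.
Variable T : finType.
Variable e : rel T.
Hypothesis conn : connected_graph e.

Lemma walk_lenP x y n :
  reflect (exists p : seq T, [/\ size p = n, path e x p & last x p = y])
          (walk_len e x y n).
Proof.
apply: (iffP existsP).
  move=> [p /andP[hp /eqP hl]]; exists (val p); split => //; exact: size_tuple.
move=> [p [hs hp hl]].
have hs' : size p == n by apply/eqP.
by exists (Tuple hs'); rewrite /= hp hl eqxx.
Qed.

Lemma walk_exists x y : exists2 n, (n < #|T|)%N & walk_len e x y n.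
Proof.
have /connectP [p hp ->] := conn x y.
case: (shortenP hp) => p' hp' hu _.
exists (size p'); last by apply/walk_lenP; exists p'.
have := card_uniqP hu; move=> /= H.
by rewrite -ltnS -H; apply: max_card.
Qed.

Lemma gdist_walk x y : walk_len e x y (gdist e x y).
Proof.
have [n hn hw] := walk_exists x y.
have hh : has (walk_len e x y) (iota 0 #|T|).
  by apply/hasP; exists n => //; rewrite mem_iota.
have := nth_find 0 hh.
have hf : (find (walk_len e x y) (iota 0 #|T|) < #|T|)%N.
  by rewrite -[X in (_ < X)%N](size_iota 0) -has_find.
by rewrite nth_iota // add0n.
Qed.

Lemma gdist_min x y n : walk_len e x y n -> (gdist e x y <= n)%N.
Proof.
move=> hw; rewrite leqNgt; apply/negP => hlt.
have hf : (gdist e x y <= #|T|)%N.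
  by rewrite /gdist -[X in (_ <= X)%N](size_iota 0) find_size.
have hn : (n < #|T|)%N by apply: leq_trans hlt hf.
have := before_find 0 hlt; rewrite nth_iota // add0n hw //.
Qed.

Lemma gdist0 x y : gdist e x y = 0%N -> x = y.
Proof.
move=> h; have := gdist_walk x y; rewrite h => /walk_lenP [p [hs _ hl]].
by case: p hs hl.
Qed.

Lemma gdist_refl x : gdist e x x = 0%N.
Proof.
apply/eqP; rewrite -leqn0; apply: gdist_min; apply/walk_lenP; by exists [::].
Qed.

Lemma gdist_step x n y : e x n -> (gdist e x y <= (gdist e n y).+1)%N.
Proof.
move=> hxn; apply: gdist_min; have /walk_lenP [p [hs hp hl]] := gdist_walk n y.
apply/walk_lenP; exists (n :: p); split => //=; first by rewrite hs.
by rewrite hxn.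
Qed.

End G.

Section Wass.
Variables (R : realType) (T : finType) (e : rel T) (v : T).

Lemma sum_ind (F : T -> R) : \sum_y F y * (if y == v then 1 else 0) = F v.
Proof.
rewrite (bigD1 v) //= eqxx mulr1 big1 ?addr0 // => y /negbTE ->; exact: mulr0.
Qed.

Lemma wass_dirac (mu nu : T -> R) :
  (forall x, 0 <= mu x) -> \sum_x mu x = 1 ->
  (forall y, nu y = if y == v then 1 else 0) ->
  wasserstein e mu nu = \sum_x mu x * (gdist e x v)%:R.
Proof.
move=> mu0 mu1 hnu.
rewrite /wasserstein.
set c0 := \sum_x _.
suff -> : [set c | exists pi, coupling mu nu pi /\ c = tcost e pi]%classic = [set c0]%classic.
  exact: inf1.
apply/seteqP; split => c /=.
  move=> [pi [[p0 [prow pcol]] ->]].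
  have hz : forall x y, y != v -> pi x y = 0.
    move=> x y hy; have := pcol y; rewrite hnu (negbTE hy) => hs.
    by apply: (psumr_eq0P (fun i _ => p0 i y) hs).
  have hpv : forall x, pi x v = mu x.
    move=> x; rewrite -prow (bigD1 v) //= big1 ?addr0 // => y hy; exact: hz.
  rewrite /tcost /c0; apply: eq_bigr => x _.
  rewrite (bigD1 v) //= big1 ?addr0 ?hpv // => y hy; by rewrite hz ?mul0r.
move=> ->; exists (fun x y => mu x * (if y == v then 1 else 0)); split.
  split; first by move=> x y; apply: mulr_ge0 => //; case: ifP.
  split.
    move=> x; rewrite -mulr_sumr.
    have := sum_ind (fun _ => 1); under eq_bigr do rewrite mul1r; move=> ->.
    exact: mulr1.
  by move=> y; rewrite -mulr_suml mu1 mul1r hnu.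
rewrite /tcost /c0; apply: eq_bigr => x _.
rewrite (bigD1 v) //= eqxx mulr1 big1 ?addr0 // => y /negbTE ->.
by rewrite mulr0 mul0r.
Qed.

Lemma wass_zero (mu nu : T -> R) :
  (forall x y, gdist e x y = 0%N) -> wasserstein e mu nu = 0.
Proof.
move=> h0; rewrite /wasserstein.
set S := [set c | _]%classic.
have hS : forall c, S c -> c = 0.
  move=> c [pi [_ ->]]; rewrite /tcost big1 // => x _; rewrite big1 // => y _.
  by rewrite h0 mulr0.
case: (pselect (exists c, S c)) => [[c Sc]|nS].
  have -> : S = [set 0]%classic.
    apply/seteqP; split => d /=; first exact: hS.
    by move=> ->; rewrite -(hS c Sc).
  exact: inf1.
have -> : S = set0.
  by apply/seteqP; split => d //= Sd; apply: nS; exists d.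
exact: inf0.
Qed.

Lemma walk_lazy1 k y : walk_dist e (1 : R) v k y = if y == v then 1 else 0.
Proof.
elim: k y => [//|k IH] y /=.
under eq_bigr do rewrite IH mulrC.
rewrite sum_ind /trans subrr mul0r if_same addr0 eq_sym.
by [].
Qed.

End Wass.
Section Main.
Variables (R : realType) (T : finType) (e : rel T) (v : T) (a : R).
Hypothesis sg : simple_graph e.
Hypothesis conn : connected_graph e.
Hypothesis a0 : 0 <= a.
Hypothesis a1 : a <= 1.
Local Notation f x := (gdist e x v).
Local Notation D := (ecc e v).
Hypothesis hD : (0 < D)%N.
Hypothesis hmax : forall x, gdist e x v = ecc e v ->
     forall n, e x n -> (gdist e n v < gdist e x v)%N.
Hypothesis hmid : forall x, (0 < gdist e x v)%N -> (gdist e x v < ecc e v)%N ->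
     (2 * #|[set n | e x n & (gdist e n v < gdist e x v)%N]| = deg e x)%N /\
     (2 * #|[set n | e x n & (gdist e x v < gdist e n v)%N]| = deg e x)%N.

Lemma f_le x : (f x <= D)%N.
Proof. by rewrite /ecc; apply: (@leq_bigmax _ (fun w => gdist e w v)). Qed.

Lemma nb_close x y : e x y -> (f x <= (f y).+1)%N /\ (f y <= (f x).+1)%N.
Proof.
move=> hxy; split; first exact: (gdist_step conn).
apply: (gdist_step conn); case: sg => hs _; by rewrite hs.
Qed.

Lemma deg_pos x : (0 < deg e x)%N.
Proof.
have [w hw] : exists w, f w != 0%N.
  case: (boolP [exists w, f w != 0%N]) => [/existsP//|/existsPn H].
  move: hD; rewrite /ecc big1 // => w _; by have := H w; rewrite negbK => /eqP.
have [y hy] : exists y, y != x.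
  case: (x =P v) => [->|/eqP h]; last by exists v; rewrite eq_sym.
  exists w; apply/eqP => hwv; move: hw; by rewrite hwv (gdist_refl e).
have /connectP [p hp hl] := conn x y.
case: p hp hl => [|z p] /=; first by move=> _ hl; move: hy; rewrite hl eqxx.
move=> /andP[hxz _] _.
rewrite /deg card_gt0; apply/set0Pn; exists z; by rewrite inE.
Qed.

Definition L (phi : nat -> R) (i : nat) : R :=
  a * phi i + (1 - a) * (if i == 0%N then phi 1%N else if i == D then phi D.-1
                         else (phi i.-1 + phi i.+1) / 2).

Lemma stepx x phi : \sum_y trans e a x y * phi (f y) = L phi (f x).
Proof.
rewrite /trans; under eq_bigr do rewrite mulrDl.
rewrite big_split /=.
rewrite (bigD1 x) //= eqxx big1 ?addr0; last first.
  by move=> y hy; rewrite eq_sym (negbTE hy) mul0r.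
set c := (1 - a) / _.
have -> : \sum_y (if e x y then c else 0) * phi (f y) =
          c * \sum_(y in nbhd e x) phi (f y).
  rewrite mulr_sumr [RHS]big_mkcond /=; apply: eq_bigr => y _.
  by rewrite inE; case: ifP => _; rewrite ?mul0r.
have dp := deg_pos x.
have dn : (deg e x)%:R != 0 :> R by rewrite pnatr_eq0 -lt0n.
rewrite /L; congr (_ + _); rewrite -/(deg e x).
case: (f x =P 0%N) => [h0|hn0].
  rewrite (eq_bigr (fun _ => phi 1%N)); last first.
    move=> y; rewrite inE => hxy; congr phi.
    have [_ h2] := nb_close hxy; rewrite h0 in h2.
    case: (f y =P 0%N) => [/(gdist0 conn) hyv|]; last by lia.
    have hxv := gdist0 conn h0; move: hxy; rewrite hyv -hxv.
    by case: sg => _ hirr; rewrite hirr.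
  rewrite sumr_const -/(deg e x) /c -mulr_natr; field; exact: dn.
case: (f x =P D) => [hDx|hnD].
  rewrite (eq_bigr (fun _ => phi D.-1)); last first.
    move=> y; rewrite inE => hxy; congr phi.
    have [h1 _] := nb_close hxy; have := hmax hDx hxy; lia.
  rewrite sumr_const -/(deg e x) /c -mulr_natr; field; exact: dn.
have hlo : (0 < f x)%N by lia.
have hhi : (f x < D)%N by have := f_le x; lia.
have [hd hu] := hmid hlo hhi.
set Dn := [set n | e x n & _] in hd.
set Up := [set n | e x n & _] in hu.
have hdis : [disjoint Dn & Up].
  rewrite -setI_eq0; apply/eqP/setP => y; rewrite !inE; apply/negP.
  move=> /andP[/andP[_ h1] /andP[_ h2]]; lia.
have hU : nbhd e x = Dn :|: Up.
  apply/eqP; rewrite eq_sym eqEcard; apply/andP; split.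
    by apply/fintype.subsetP => y; rewrite !inE => /orP[] /andP[->].
  rewrite cardsU; move: hdis; rewrite -setI_eq0 => /eqP ->; rewrite cards0.
  rewrite /deg in hd hu; lia.
rewrite hU (eq_bigl [predU Dn & Up]); last by move=> y; rewrite !inE.
rewrite bigU //=.
rewrite (eq_bigr (fun _ => phi (f x).-1)); last first.
  move=> y; rewrite inE => /andP[hxy hlt]; congr phi.
  have [h1 _] := nb_close hxy; lia.
rewrite [X in _ + X](eq_bigr (fun _ => phi (f x).+1)); last first.
  move=> y; rewrite inE => /andP[hxy hlt]; congr phi.
  have [_ h2] := nb_close hxy; lia.
rewrite !sumr_const /c.
have hUp : #|Up| = #|Dn| by lia.
have hx0 : (f x == 0%N) = false by apply/eqP.
have hxD : (f x == D) = false by apply/eqP.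
rewrite hUp -mulrnDl -mulr_natr -[deg e x]hd natrM.
have : (#|Dn|)%:R != 0 :> R.
  rewrite pnatr_eq0; apply/eqP => h; move: dp; rewrite -hd h; lia.
move=> hn; field; by rewrite hn.
Qed.

Lemma Lsym phi i : (i <= D)%N -> L (fun j => phi (D - j)%N) i = L phi (D - i)%N.
Proof.
move=> hi; rewrite /L.
case: (i =P 0%N) => [->|h0].
  rewrite subn0 eqxx (_ : (D == 0%N) = false); last by lia.
  by rewrite subn1.
case: (i =P D) => [->|hnD].
  rewrite subnn eqxx (_ : (D - D.-1 = 1)%N); last by lia.
  by [].
rewrite (_ : (D - i == 0)%N = false); last by lia.
rewrite (_ : (D - i == D)%N = false); last by lia.
rewrite (_ : (D - i.-1 = (D - i).+1)%N); last by lia.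
rewrite (_ : (D - i.+1 = (D - i).-1)%N); last by lia.
by rewrite [phi (D - i).+1 + _]addrC.
Qed.

Variable u : T.
Lemma wd0 (g : R) y : walk_dist e g u 0 y = if y == u then 1 else 0. Proof. by []. Qed.
Lemma sum_dirac (F : T -> R) : \sum_x walk_dist e a u 0 x * F x = F u.
Proof.
rewrite (bigD1 u) //= eqxx mul1r big1 ?addr0 //.
by move=> y /negbTE hy; rewrite hy mul0r.
Qed.
Hypothesis hu : (2 * gdist e u v = ecc e v)%N.
Local Notation mu k := (walk_dist e a u k).

Lemma step phi k : \sum_y mu k.+1 y * phi (f y) = \sum_x mu k x * L phi (f x).
Proof.
rewrite /=; under eq_bigr do rewrite mulr_suml.
rewrite exchange_big /=; apply: eq_bigr => x _.
rewrite -stepx mulr_sumr; apply: eq_bigr => y _; by rewrite mulrA.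
Qed.

Lemma symk k : forall phi, \sum_x mu k x * phi (f x) = \sum_x mu k x * phi (D - f x)%N.
Proof.
elim: k => [|k IH] phi.
  rewrite !sum_dirac.
  have -> : (D - f u = f u)%N by lia.
  by [].
rewrite step.
rewrite (step (fun j => phi (D - j)%N)).
under [RHS]eq_bigr do rewrite Lsym ?f_le //.
have := IH (fun j => L phi (D - j)%N) => /= ->.
apply: eq_bigr => x _.
have -> : (D - (D - f x) = f x)%N by have := f_le x; lia.
by [].
Qed.

Lemma L1 i : L (fun _ => 1) i = 1.
Proof.
have h2 : (1 + 1) / 2 = 1 :> R by rewrite -[1 + 1]/(2%:R) divff // pnatr_eq0.
rewrite /L; case: ifP => _; [|case: ifP => _]; rewrite ?h2; ring.
Qed.

Lemma mass k : \sum_x mu k x = 1.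
Proof.
elim: k => [|k IH].
  have := sum_dirac (fun _ => 1); under eq_bigr do rewrite mulr1; by [].
have := step (fun _ => 1) k.
under eq_bigr do rewrite mulr1.
move=> ->; under eq_bigr do rewrite L1 mulr1; exact: IH.
Qed.

Lemma mu_ge0 k x : 0 <= mu k x.
Proof.
elim: k x => [|k IH] x /=; first by case: ifP.
apply: sumr_ge0 => y _; apply: mulr_ge0 => //.
rewrite /trans; apply: addr_ge0; first by case: ifP.
case: ifP => _ //; apply: divr_ge0; [by rewrite subr_ge0|exact: ler0n].
Qed.

Lemma expect k : \sum_x mu k x * (f x)%:R = (f u)%:R.
Proof.
have := symk k (fun i => i%:R) => /=.
under [X in _ = X -> _]eq_bigr do rewrite natrB ?f_le // mulrBr.
rewrite sumrB -mulr_suml mass mul1r.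
move: hu => /(congr1 (fun n => n%:R : R)); rewrite natrM => h.
rewrite -h; lra.
Qed.

End Main.

Unset Implicit Arguments.

Theorem lemma7p5 (R : realType) (T : finType) (e : rel T)
  (u v : T) (alpha beta : R) :
  simple_graph e -> connected_graph e ->
  0 <= alpha -> alpha <= beta -> beta <= 1 ->
  beta = 1 ->
  (2 * gdist e u v = ecc e v)%N ->
  (forall x, gdist e x v = ecc e v ->
     forall n, e x n -> (gdist e n v < gdist e x v)%N) ->
  (forall x, (0 < gdist e x v)%N -> (gdist e x v < ecc e v)%N ->
     (2 * #|[set n | e x n & (gdist e n v < gdist e x v)%N]| = deg e x)%N /\
     (2 * #|[set n | e x n & (gdist e x v < gdist e n v)%N]| = deg e x)%N) ->
  forall k : nat,
    wasserstein e (walk_dist e alpha u k) (walk_dist e beta v k)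
    = wasserstein e (walk_dist e alpha u 0) (walk_dist e beta v 0).
Proof.
move=> sg conn a0 aleb b1 hb hu hmax hmid k.
have a1 : alpha <= 1 by rewrite -hb in b1 *; exact: le_trans aleb b1.
subst beta.
case: (posnP (ecc e v)) => [hD0|hD].
  have hall : forall x, x = v.
    move=> x; apply: (gdist0 conn); have := f_le e v x; rewrite hD0; lia.
  have h0 : forall x y, gdist e x y = 0%N.
    by move=> x y; rewrite (hall x) (hall y) gdist_refl.
  by rewrite !(wass_zero _ _ h0).
have hnu : forall j y, walk_dist e (1 : R) v j y = if y == v then 1 else 0.
  exact: walk_lazy1.
rewrite !(wass_dirac e (mu_ge0 e a0 a1 u _) (mass sg conn a0 a1 hD hmax hmid u _) (hnu _)).
by rewrite !(expect sg conn a0 a1 hD hmax hmid hu).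
Qed.
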